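(* Consider the structured private pooled-sequencing scheme with constant coverage depth described in the context, with $M$ unknown and $M$ known individuals. Let $\beta\in(0,1)$. If $M\geq 1/\beta$, then the privacy condition $$\frac{I\left(X_{m,n},\ m\in\{0,\dots,M-1\},\ n\in[N];\ \mathcal{R}\right)}{MN}\leq\beta$$ holds, where $\mathcal{R}$ is the set of reads available to the sequencer.
   Context: Setting. Each genome is described by $N$ SNP positions with binary values. There are $M$ ''unknown'' individuals $m\in\{0,\dots,M-1\}$ with SNP matrix $\mathbf{X}\in\{0,1\}^{M\times N}$ whose entries $X_{m,n}$ are mutually independent (with arbitrary allele-frequency priors), and $M$ ''known'' individuals $k\in\{0,\dots,M-1\}$ with SNP matrix $\mathbf{Y}\in\{0,1\}^{M\times N}$ whose entries are i.i.d. uniform on $\{0,1\}$ and independent of $\mathbf{X}$; $\mathbf{Y}$ is known to a trusted data collector but unknown to the sequencer. Genomes are sheared into fragments, each containing at most one SNP and mappable unambiguously to its SNP position. All fragments are pooled without individual labels and sent to the sequencer, which reads them, each SNP read being flipped independently with probability $\eta\in(0,1/2)$; $\mathcal{R}$ is the resulting set of reads. In the structured scheme with constant coverage depth, at every SNP position $n$ unknown individual $m$ contributes exactly $2^m\alpha_0$ fragments and known individual $k$ contributes exactly $2^k\alpha_0$ fragments, $\alpha_0\in\mathbb{N}$. Hence for each position $n$ the sequencer's information is the count of read 1's among fragments covering $n$ (modeled, after normalization, as $q_n=\sum_{m=0}^{M-1}2^m(X_{m,n}+Y_{m,n})+\tilde Z_n$ with Gaussian noise $\tilde Z_n$ independent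 of $\mathbf{X},\mathbf{Y}$). *)

(* Defs.v *)
From HB Require Import structures.
From mathcomp Require Import all_boot all_order all_algebra.
From mathcomp Require Import reals exp.
Set Implicit Arguments. Unset Strict Implicit. Unset Printing Implicit Defensive.
Import Order.TTheory GRing.Theory Num.Theory.
Local Open Scope ring_scope.

Definition mutual_info {R : realType} {A B : finType} (P : A -> B -> R) : R :=
  \sum_(a : A) \sum_(b : B)
    (if P a b == 0 then 0
     else P a b * (ln (P a b / ((\sum_(b' : B) P a b') * (\sum_(a' : A) P a' b)))
                   / ln 2)).

(* SNP matrices: entry (m, n) = SNP n of individual m. *)
Definition snp_mat (M N : nat) := {ffun 'I_M * 'I_N -> bool}.

Definition prior {R : realType} (M N : nat) (p : 'I_M * 'I_N -> R)
  (x : snp_mat M N) : R :=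
  \prod_(i : 'I_M * 'I_N) (if x i then p i else 1 - p i).

(* Law of the known matrix Y: i.i.d. uniform bits. *)
Definition unif_prob {R : realType} (M N : nat) : R := (2 ^+ (M * N))^-1.

(* Number of fragments carrying allele 1 at position n (before read errors):
   unknown m contributes 2^m alpha0 fragments, known k contributes 2^k alpha0. *)
Definition ones_at (M N alpha0 : nat) (x y : snp_mat M N) (n : 'I_N) : nat :=
  alpha0 * \sum_(m < M) 2 ^ m * (x (m, n) + y (m, n)).

Definition depth (M alpha0 : nat) : nat := 2 * alpha0 * (2 ^ M - 1).

(* Independent read-flip indicators, one for each fragment f at each position n. *)
Definition flips (M N alpha0 : nat) := {ffun 'I_N * 'I_(depth M alpha0) -> bool}.

Definition flip_prob {R : realType} (M N alpha0 : nat) (eta : R)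
  (e : flips M N alpha0) : R :=
  \prod_(i : 'I_N * 'I_(depth M alpha0)) (if e i then eta else 1 - eta).

(* The sequencer's observation (the pooled reads R): for each position n,
   the number of reads equal to 1.  Fragments at position n are listed so that
   the first [ones_at .. n] of them carry allele 1; the read of fragment f is its
   allele xor the flip e (n, f). *)
Definition obs_space (M N alpha0 : nat) := {ffun 'I_N -> 'I_(depth M alpha0).+1}.

Definition read_counts (M N alpha0 : nat) (x y : snp_mat M N)
  (e : flips M N alpha0) : obs_space M N alpha0 :=
  [ffun n => inord #|[set f : 'I_(depth M alpha0) |
                       (f < ones_at alpha0 x y n)%N (+) e (n, f)]|].

Definition joint_XR {R : realType} (M N alpha0 : nat) (p : 'I_M * 'I_N -> R)
  (eta : R) (x : snp_mat M N) (r : obs_space M N alpha0) : R :=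
  \sum_(y : snp_mat M N) \sum_(e : flips M N alpha0)
    (if read_counts x y e == r
     then prior p x * @unif_prob R M N * flip_prob eta e else 0).

(* Main.v *)
Require Import Defs.
From HB Require Import structures.
From mathcomp Require Import all_boot all_order all_algebra.
From mathcomp Require Import reals exp.
From mathcomp Require Import ring lra zify.
Set Implicit Arguments. Unset Strict Implicit. Unset Printing Implicit Defensive.
Import Order.TTheory GRing.Theory Num.Theory.
Local Open Scope ring_scope.

Lemma ln_le_sub1 {R : realType} (z : R) : 0 < z -> ln z <= z - 1.
Proof.
move=> z0; have := @le_ln1Dx R (z - 1); rewrite [1 + _]addrC subrK; apply.
by rewrite -ltrBlDr opprK addrC subrr.
Qed.

Lemma mi_bound {R : realType} {A B : finType} (P : A -> B -> R) (T : B -> R) (c : R) :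
  (forall a b, 0 <= P a b) -> (forall b, 0 <= T b) -> 0 < c ->
  \sum_a \sum_b P a b = 1 -> \sum_b T b <= 1 ->
  (forall a b, P a b <= c * (\sum_b' P a b') * T b) ->
  mutual_info P <= ln c / ln 2.
Proof.
move=> P0 T0 c0 sP sT Pc.
have l2 : 0 < ln (2:R) by apply: ln_gt0; rewrite ltr1n.
pose Q b := \sum_a' P a' b.
pose h a b := if P a b == 0 then 0 else P a b * ln (T b / Q b).
have step : forall a b, (if P a b == 0 then 0
     else P a b * (ln (P a b / ((\sum_(b' : B) P a b') * (\sum_(a' : A) P a' b)))
                   / ln 2)) <= (P a b * ln c + h a b) / ln 2.
  move=> a b; rewrite /h; case: eqP => [->|/eqP Pn]; first by rewrite mul0r addr0 mul0r.
  have Pp : 0 < P a b by rewrite lt_def Pn P0.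
  have Pap : 0 < \sum_b' P a b'.
    apply: lt_le_trans Pp _; rewrite (bigD1 b) //= lerDl; exact: sumr_ge0.
  have Qp : 0 < Q b.
    apply: lt_le_trans Pp _; rewrite /Q (bigD1 a) //= lerDl; exact: sumr_ge0.
  have Tp : 0 < T b.
    rewrite lt_def T0 andbT; apply/eqP => Tb; move: (Pc a b); rewrite Tb mulr0.
    by move=> H; move: Pn; rewrite eq_le H P0.
  rewrite mulrA ler_pM2r ?invr_gt0 // -mulrDr ler_pM2l //.
  have -> : P a b / ((\sum_b' P a b') * Q b) = (P a b / ((\sum_b' P a b') * T b)) * (T b / Q b).
    by field; rewrite ?gt_eqF.
  rewrite lnM ?lerD2r; last 2 first.
  - by rewrite posrE divr_gt0 // mulr_gt0.
  - by rewrite posrE divr_gt0.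
  rewrite ler_ln ?posrE ?divr_gt0 ?mulr_gt0 //.
  by rewrite ler_pdivrMr ?mulr_gt0 // mulrA.
apply: le_trans (ler_sum _ (fun a _ => ler_sum _ (fun b _ => step a b))) _.
under eq_bigr do rewrite -mulr_suml.
rewrite -mulr_suml ler_pM2r ?invr_gt0 //.
under eq_bigr do rewrite big_split /=.
rewrite big_split /=; under eq_bigr do rewrite -mulr_suml.
rewrite -mulr_suml sP mul1r gerDl.
idtac.
rewrite exchange_big /=.
have hb : forall b, \sum_a h a b <= T b - Q b.
  move=> b; have [Q0|Qn] := eqVneq (Q b) 0.
    have Pz : forall a, P a b = 0.
      by move=> a; apply: (psumr_eq0P _ Q0) => // i _.
    rewrite big1 ?Q0 ?subr0 // => a _; by rewrite /h Pz eqxx.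
  have Qp : 0 < Q b by rewrite lt_def Qn sumr_ge0.
  have -> : \sum_a h a b = Q b * ln (T b / Q b).
    rewrite /Q mulr_suml; apply: eq_bigr => a _; rewrite /h; case: eqP => // ->; by rewrite mul0r.
  have [T0'|Tn] := eqVneq (T b) 0.
    exfalso; move/eqP: Qn; apply; rewrite /Q big1 // => a _.
    by apply/eqP; rewrite eq_le P0 andbT; have := Pc a b; rewrite T0' mulr0.
  have Tp : 0 < T b by rewrite lt_def Tn T0.
  have := @ln_le_sub1 R _ (divr_gt0 Tp Qp).
  rewrite -(ler_pM2l Qp) => /le_trans; apply.
  by rewrite mulrBr mulr1 mulrCA divff ?gt_eqF // mulr1.
apply: le_trans (ler_sum _ (fun b _ => hb b)) _.
rewrite sumrB subr_le0; apply: le_trans sT _.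
by rewrite /Q exchange_big /= sP.
Qed.
Lemma binsum_lt M (b : 'I_M -> bool) : (\sum_(m < M) 2 ^ m * b m < 2 ^ M)%N.
Proof.
elim: M b => [|M IH] b; first by rewrite big_ord0.
rewrite big_ord_recr /= expnS.
have := IH (fun m => b (widen_ord (leqnSn M) m)).
case: (b ord_max) => /=; lia.
Qed.

Lemma bin_inj M (b c : 'I_M -> bool) :
  (\sum_(m < M) 2 ^ m * b m = \sum_(m < M) 2 ^ m * c m)%N -> forall i, b i = c i.
Proof.
elim: M b c => [|M IH] b c; first by move=> _ [].
rewrite !big_ord_recl /=.
under eq_bigr do rewrite /bump add1n expnS -mulnA.
under [X in _ = (_ + X)%N]eq_bigr do rewrite /bump add1n expnS -mulnA.
rewrite -!big_distrr /= !expn0 !mul1n.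
set S1 := (\sum_(i < M) _)%N; set S2 := (\sum_(i < M) _)%N.
move=> H.
have [e0 eS] : b ord0 = c ord0 /\ S1 = S2.
  by move: H; case: (b ord0); case: (c ord0) => /= H; split => //; lia.
have IH' := IH _ _ eS.
move=> i; case: (unliftP ord0 i) => [j ->|->] //; exact: IH'.
Qed.

Definition colsum M N (x y : snp_mat M N) (n : 'I_N) : nat :=
  (\sum_(m < M) 2 ^ m * (x (m, n) + y (m, n)))%N.

Lemma colsum_lt M N (x y : snp_mat M N) n : (colsum x y n < 2 ^ M.+1)%N.
Proof.
rewrite /colsum.
under eq_bigr do rewrite mulnDr.
rewrite big_split /= expnS.
have := binsum_lt (fun m => x (m, n)); have := binsum_lt (fun m => y (m, n)).
move=> Hy Hx; rewrite mul2n -addnn -addSn; exact: leq_add Hx (ltnW Hy).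
Qed.

Definition Wt M N := {ffun 'I_N -> 'I_(2 ^ M.+1)}.

Definition sxy M N (x y : snp_mat M N) : Wt M N :=
  [ffun n => Ordinal (colsum_lt x y n)].

Definition rcw M N alpha0 (w : Wt M N) (e : flips M N alpha0) : obs_space M N alpha0 :=
  [ffun n => inord #|[set f : 'I_(depth M alpha0) |
                       (f < alpha0 * w n)%N (+) e (n, f)]|].

Lemma rc_rcw M N alpha0 (x y : snp_mat M N) (e : flips M N alpha0) :
  read_counts x y e = rcw (sxy x y) e.
Proof. by apply/ffunP => n; rewrite !ffunE. Qed.

Lemma sxy_inj M N (x y y' : snp_mat M N) : sxy x y = sxy x y' -> y = y'.
Proof.
move=> H; apply/ffunP => -[m n].
have : colsum x y n = colsum x y' n.
  by move/ffunP: H => /(_ n); rewrite !ffunE => -[].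
rewrite /colsum.
under eq_bigr do rewrite mulnDr.
under [X in _ = X]eq_bigr do rewrite mulnDr.
rewrite !big_split /= => /addnI.
by move/(bin_inj (b := fun m => y (m, n)) (c := fun m => y' (m, n)))/(_ m).
Qed.
Lemma sum_ifeq {R : realType} {T : finType} (c : T) (a : R) :
  \sum_r (if c == r then a else 0) = a.
Proof.
by rewrite (bigD1 c) //= eqxx big1 ?addr0 // => r; rewrite eq_sym => /negbTE ->.
Qed.

Lemma sum_bern {R : realType} {I : finType} (q : I -> R) :
  \sum_(f : {ffun I -> bool}) \prod_i (if f i then q i else 1 - q i) = 1.
Proof.
rewrite -(bigA_distr_bigA (fun i (b : bool) => if b then q i else 1 - q i)) /=.
by apply: big1 => i _; rewrite big_bool /= addrC subrK.
Qed.

Lemma bern_ge0 {R : realType} {I : finType} (q : I -> R) (f : {ffun I -> bool}) :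
  (forall i, 0 <= q i <= 1) -> 0 <= \prod_i (if f i then q i else 1 - q i).
Proof.
move=> H; apply: prodr_ge0 => i _; have /andP[h0 h1] := H i.
by case: (f i) => //; rewrite subr_ge0.
Qed.

Section S.
Context (R : realType) (M N alpha0 : nat) (eta : R) (p : 'I_M * 'I_N -> R).
Hypothesis eta01 : 0 <= eta <= 1.
Hypothesis p01 : forall i, 0 <= p i <= 1.

Definition G (w : Wt M N) (r : obs_space M N alpha0) : R :=
  \sum_(e : flips M N alpha0) (if rcw w e == r then flip_prob eta e else 0).

Lemma flip_ge0 e : 0 <= @flip_prob R M N alpha0 eta e.
Proof. exact: bern_ge0 (fun _ => eta) e (fun _ => eta01). Qed.

Lemma G_ge0 w r : 0 <= G w r.
Proof. by apply: sumr_ge0 => e _; case: ifP => // _; apply: flip_ge0. Qed.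

Lemma G_sum w : \sum_r G w r = 1.
Proof.
rewrite /G exchange_big /=.
under eq_bigr do rewrite sum_ifeq.
exact: (sum_bern (fun _ => eta)).
Qed.

Lemma joint_eq x r : @joint_XR R M N alpha0 p eta x r =
  prior p x * @unif_prob R M N * \sum_y G (sxy x y) r.
Proof.
rewrite /joint_XR mulr_sumr; apply: eq_bigr => y _.
rewrite /G mulr_sumr; apply: eq_bigr => e _.
by rewrite rc_rcw; case: ifP => _; rewrite ?mulr0.
Qed.

Lemma pow2_neq0 k : (2 : R) ^+ k != 0.
Proof. by rewrite expf_neq0 // pnatr_eq0. Qed.

Lemma marg_x x : \sum_r @joint_XR R M N alpha0 p eta x r = prior p x.
Proof.
under eq_bigr do rewrite joint_eq.
rewrite -mulr_sumr exchange_big /=.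
under eq_bigr do rewrite G_sum.
rewrite sumr_const card_ffun card_bool card_prod !card_ord /unif_prob.
by rewrite -mulrA -natrX mulVf ?mulr1 // natrX pow2_neq0.
Qed.

Definition Tm (r : obs_space M N alpha0) : R :=
  (2 ^+ (M.+1 * N))^-1 * \sum_w G w r.

Lemma Tm_ge0 r : 0 <= Tm r.
Proof. by rewrite mulr_ge0 ?invr_ge0 ?exprn_ge0 ?sumr_ge0 // => w _; apply: G_ge0. Qed.

Lemma Tm_sum : \sum_r Tm r = 1.
Proof.
rewrite -mulr_sumr exchange_big /=.
under eq_bigr do rewrite G_sum.
rewrite sumr_const card_ffun !card_ord -expnM.
by rewrite -natrX mulVf // natrX pow2_neq0.
Qed.

Lemma inj_bound x r : \sum_y G (sxy x y) r <= \sum_w G w r.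
Proof.
have -> : \sum_y G (sxy x y) r = \sum_(w in [set sxy x y | y in [set: snp_mat M N]]) G w r.
  rewrite big_imset /=; last by move=> y1 y2 _ _; apply: sxy_inj.
  by apply: eq_bigl => y; rewrite inE.
rewrite big_mkcond /=; apply: ler_sum => w _.
by case: ifP => _ //; apply: G_ge0.
Qed.

Lemma joint_bound x r : @joint_XR R M N alpha0 p eta x r <=
  2 ^+ N * (\sum_r' @joint_XR R M N alpha0 p eta x r') * Tm r.
Proof.
rewrite marg_x joint_eq /Tm.
have -> : 2 ^+ N * prior p x * ((2 ^+ (M.+1 * N))^-1 * \sum_w G w r) =
   prior p x * @unif_prob R M N * \sum_w G w r.
  rewrite /unif_prob mulSn exprD invfM.
  have h := pow2_neq0 N.
  by field; rewrite ?pow2_neq0.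
apply: ler_wpM2l; last exact: inj_bound.
apply: mulr_ge0; first exact: bern_ge0.
by rewrite /unif_prob invr_ge0 exprn_ge0.
Qed.

End S.
Unset Implicit Arguments.
Theorem theorem2 (R : realType) (M N alpha0 : nat) (beta eta : R)
    (p : 'I_M * 'I_N -> R) :
  0 < beta < 1 ->
  0 < eta < 1 / 2 ->
  (forall i, 0 <= p i <= 1) ->
  1 / beta <= M%:R ->
  mutual_info (@joint_XR R M N alpha0 p eta) / (M * N)%:R <= beta.
Proof.
move=> /andP[b0 b1] /andP[e0 e1] p01 hM.
have eta01 : 0 <= eta <= 1 by apply/andP; split; lra.
have MI : mutual_info (@joint_XR R M N alpha0 p eta) <= N%:R.
  have l2 : 0 < ln (2:R) by apply: ln_gt0; rewrite ltr1n.
  apply: le_trans (@mi_bound R _ _ _ (@Tm R M N alpha0 eta) (2 ^+ N) _ _ _ _ _ _) _.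
  - move=> x r; rewrite joint_eq //; apply: mulr_ge0; last first.
      by apply: sumr_ge0 => y _; apply: G_ge0.
    apply: mulr_ge0; first exact: bern_ge0.
    by rewrite /unif_prob invr_ge0 exprn_ge0.
  - by move=> r; apply: Tm_ge0.
  - by rewrite exprn_gt0.
  - under eq_bigr do rewrite marg_x //.
    exact: sum_bern.
  - by rewrite Tm_sum.
  - by move=> x r; apply: joint_bound.
  rewrite lnXn; last by rewrite ltr0n.
  by rewrite -(mulr_natl (ln 2)) -mulrA divff ?mulr1 // gt_eqF.
have Mp : 0 < M%:R :> R by apply: lt_le_trans hM; rewrite divr_gt0.
have [N0|Nn] := eqVneq N 0%N.
  by rewrite (_ : (M * N)%:R = 0) ?invr0 ?mulr0 ?ltW // N0 muln0.
have Np : 0 < N%:R :> R by rewrite ltr0n lt0n.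
apply: le_trans (_ : N%:R / (M * N)%:R <= beta).
  by rewrite ler_wpM2r // invr_ge0 ler0n.
rewrite natrM invfM mulrCA divff ?gt_eqF // mulr1.
move: hM; rewrite ler_pdivrMr // => h.
by rewrite -[_^-1]mul1r ler_pdivrMr // mulrC.
Qed.
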